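(* Let $G$ be a finite graph and $a\in V(G)$. Suppose $G=H_1\cup\dots\cup H_m$ ($m\ge1$), where each $H_j$ is a connected subgraph of $G$ containing $a$ such that $H_j-a$ is nonempty and connected, $V(H_j)\cap V(H_l)=\{a\}$ for $j\ne l$, and every edge of $G$ lies in exactly one $H_j$. Call $H_j$ and $H_l$ equivalent if there is a graph isomorphism $H_j\to H_l$ mapping $a$ to $a$, and suppose there are $g$ equivalence classes, the $i$-th consisting of $m_i$ graphs each isomorphic (with $a\mapsto a$) to a graph $G_i$. Then for every positive integer $k$, $$D(G,k;a)=k\prod_{i=1}^g\binom{D(G_i,k;a)/k}{m_i}.$$
   Context: A $k$-labeling of a graph $X$ is a map $\phi:V(X)\to\{1,\dots,k\}$; an automorphism $\pi$ preserves $\phi$ if $\phi(\pi(v))=\phi(v)$ for all $v$. For a subgroup $\Gamma\le\mathrm{Aut}(X)$, $\phi$ is $\Gamma$-distinguishing if the only element of $\Gamma$ preserving $\phi$ is the identity; $\phi,\phi'$ are equivalent with respect to $\Gamma$ if some $\pi\in\Gamma$ satisfies $\phi'(\pi(v))=\phi(v)$ for all $v$; $D(X,k;\Gamma)$ is the number of $\Gamma$-equivalence classes of $\Gamma$-distinguishing $k$-labelings. For a vertex $a$, $\mathrm{Aut}(X;a)$ is the group of automorphisms of $X$ fixing $a$, and $D(X,k;a):=D(X,k;\mathrm{Aut}(X;a))$ (which is divisible by $k$). *)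

(* Defs.v *)
From mathcomp Require Import all_boot all_fingroup.
Set Implicit Arguments. Unset Strict Implicit. Unset Printing Implicit Defensive.

(* A (simple) graph on a finite vertex type T is a relation e : rel T,
   assumed symmetric and irreflexive where needed. *)

Section Labelings.
Variables (T : finType) (e : rel T) (a : T) (k : nat).

Definition aut_fix (p : {perm T}) : bool :=
  [forall x, forall y, e (p x) (p y) == e x y] && (p a == a).

(* k-labelings: maps V -> {1..k}, here encoded by 'I_k *)
Definition labeling := {ffun T -> 'I_k}.

Definition preserves (p : {perm T}) (phi : labeling) : bool :=
  [forall v, phi (p v) == phi v].

Definition distinguishing (phi : labeling) : bool :=
  [forall p : {perm T}, (aut_fix p && preserves p phi) ==> (p == 1%g)].

Definition lab_equiv (phi phi' : labeling) : bool :=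
  [exists p : {perm T}, aut_fix p && [forall v, phi' (p v) == phi v]].

Definition Dnum : nat :=
  #|[set [set phi' : labeling | distinguishing phi' && lab_equiv phi phi']
     | phi in [set phi : labeling | distinguishing phi]]|.

End Labelings.

Definition connected_on (T : finType) (V : {set T}) (r : rel T) : Prop :=
  forall x y, x \in V -> y \in V ->
    connect [rel u v | [&& r u v, u \in V & v \in V]] x y.

Definition rooted_iso (T U : finType) (VT : {set T}) (eT : rel T) (a : T)
    (VU : {set U}) (eU : rel U) (b : U) : Prop :=
  exists f : T -> U,
    [/\ {in VT &, injective f}, f @: VT = VU,
        {in VT &, forall x y, eU (f x) (f y) = eT x y} & f a = b].

(* Main.v *)
Require Import Defs.
From mathcomp Require Import all_boot all_fingroup.
From Stdlib Require Import ClassicalEpsilon.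
Set Implicit Arguments. Unset Strict Implicit. Unset Printing Implicit Defensive.

Section Gen.
Variables (T : finType) (e : rel T) (a : T) (k : nat).

Lemma autf1 : aut_fix e a 1.
Proof.
rewrite /aut_fix perm1 eqxx andbT.
by apply/forallP => x; apply/forallP => y; rewrite !perm1.
Qed.

Lemma autfE p : aut_fix e a p -> (forall x y, e (p x) (p y) = e x y) /\ p a = a.
Proof.
case/andP => /forallP H /eqP ->; split => // x y.
by move/forallP: (H x) => /(_ y) /eqP.
Qed.

Lemma autfI (p : {perm T}) : (forall x y, e (p x) (p y) = e x y) -> p a = a -> aut_fix e a p.
Proof.
move=> H1 H2; rewrite /aut_fix H2 eqxx andbT.
by apply/forallP => x; apply/forallP => y; rewrite H1.
Qed.

Lemma autfV p : aut_fix e a p -> aut_fix e a p^-1.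
Proof.
case/autfE => H1 H2; apply: autfI.
  by move=> x y; rewrite -H1 !permKV.
by rewrite -{1}H2 permK.
Qed.

Lemma autfM p q : aut_fix e a p -> aut_fix e a q -> aut_fix e a (p * q).
Proof.
case/autfE => H1 H2 /autfE [G1 G2]; apply: autfI.
  by move=> x y; rewrite !permM G1 H1.
by rewrite permM H2 G2.
Qed.

Lemma lequiv_refl (phi : labeling T k) : lab_equiv e a phi phi.
Proof.
by apply/existsP; exists 1%g; rewrite autf1 /=; apply/forallP => v; rewrite perm1.
Qed.

Lemma lequiv_sym (phi phi' : labeling T k) :
  lab_equiv e a phi phi' -> lab_equiv e a phi' phi.
Proof.
case/existsP => p /andP [Hp /forallP H]; apply/existsP; exists p^-1%g.
rewrite autfV //=; apply/forallP => v.
by move/eqP: (H (p^-1%g v)); rewrite permKV => ->.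
Qed.

Lemma lequiv_trans (phi phi' phi'' : labeling T k) :
  lab_equiv e a phi phi' -> lab_equiv e a phi' phi'' -> lab_equiv e a phi phi''.
Proof.
case/existsP => p /andP [Hp /forallP H]; case/existsP => q /andP [Hq /forallP G].
apply/existsP; exists (p * q)%g; rewrite autfM //=; apply/forallP => v.
by rewrite permM (eqP (G _)) (eqP (H _)).
Qed.

Definition lclass (phi : labeling T k) :=
  [set phi' : labeling T k | distinguishing e a phi' && lab_equiv e a phi phi'].

Lemma lclass_eq (phi phi' : labeling T k) :
  distinguishing e a phi -> distinguishing e a phi' ->
  (lclass phi == lclass phi') = lab_equiv e a phi phi'.
Proof.
move=> d d'; apply/eqP/idP.
  move=> E; have : phi' \in lclass phi' by rewrite inE d' lequiv_refl.
  by rewrite -E inE => /andP[].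
move=> H; apply/setP => x; rewrite !inE; case: (distinguishing e a x) => //=.
apply/idP/idP; first by apply: lequiv_trans; apply: lequiv_sym.
by apply: lequiv_trans.
Qed.

Lemma Dnum_lclass : Dnum e a k = #|lclass @: [set phi | distinguishing e a phi]|.
Proof. by []. Qed.

Lemma equiv_a (phi phi' : labeling T k) : lab_equiv e a phi phi' -> phi' a = phi a.
Proof.
by case/existsP => p /andP [/autfE [_ Ha] /forallP /(_ a)]; rewrite Ha => /eqP.
Qed.

End Gen.

Lemma card_imset_kernel (A B C : finType) (X : {set A}) (F : A -> B) (G : A -> C) :
  {in X &, forall x y, (F x == F y) = (G x == G y)} -> #|F @: X| = #|G @: X|.
Proof.
move=> H.
have [-> | [x0 Hx0]] := set_0Vmem X; first by rewrite (imset0 F) (imset0 G) !cards0.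
pose H' (b : B) := G (odflt x0 [pick x in X | F x == b]).
have HF x : x \in X -> H' (F x) = G x.
  move=> Hx; rewrite /H'; case: pickP => [y /andP [Hy /eqP Hxy]|/(_ x)] /=.
    by apply/eqP; rewrite -H // Hxy.
  by rewrite Hx eqxx.
have -> : G @: X = H' @: (F @: X).
  rewrite -imset_comp; apply: eq_in_imset => x Hx /=; by rewrite HF.
rewrite [RHS]card_in_imset // => b1 b2 /imsetP [x1 Hx1 ->] /imsetP [x2 Hx2 ->].
by rewrite !HF // => /eqP; rewrite -H // => /eqP.
Qed.

Lemma card_pairs (A B : finType) (Z : {set A * B}) :
  #|Z| = \sum_(c : A) #|[set b | (c, b) \in Z]|.
Proof.
have -> : \sum_(c : A) #|[set b | (c, b) \in Z]| =
  \sum_(c : A) \sum_(b : B) ((c, b) \in Z : nat).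
  by apply: eq_bigr => c _; rewrite -sum1_card big_mkcond; apply: eq_bigr => b _; rewrite inE.
by rewrite pair_big /= -sum1_card big_mkcond; apply: eq_bigr => -[c b] _.
Qed.

Section Sym.
Variables (T : finType) (e : rel T) (a : T) (k : nat).

Definition relab (t : {perm 'I_k}) (psi : labeling T k) : labeling T k :=
  [ffun v => t (psi v)].

Lemma relab_pres t p psi : preserves p (relab t psi) = preserves p psi.
Proof.
apply/forallP/forallP => H v; move: (H v); rewrite !ffunE //.
by rewrite (inj_eq perm_inj).
by rewrite (inj_eq perm_inj).
Qed.

Lemma relab_dist t psi : distinguishing e a (relab t psi) = distinguishing e a psi.
Proof.
by rewrite /distinguishing; apply: eq_forallb => p; rewrite relab_pres.
Qed.

Lemma relab_equiv t psi psi' :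
  lab_equiv e a (relab t psi) (relab t psi') = lab_equiv e a psi psi'.
Proof.
apply: eq_existsb => p; congr (_ && _); apply: eq_forallb => v.
by rewrite !ffunE (inj_eq perm_inj).
Qed.

Lemma relabK t psi : relab t^-1 (relab t psi) = psi.
Proof. by apply/ffunP => v; rewrite !ffunE permK. Qed.

Definition Xc (c : 'I_k) :=
  [set psi : labeling T k | distinguishing e a psi && (psi a == c)].

Lemma Xc_sym c c' : #|@lclass _ e a k @: Xc c| = #|@lclass _ e a k @: Xc c'|.
Proof.
pose t := tperm c c'.
have E : [set relab t x | x in Xc c] = Xc c'.
  apply/setP => psi; apply/imsetP/idP.
    case=> x; rewrite !inE => /andP [dx /eqP xa] ->.
    by rewrite relab_dist dx /= ffunE xa tpermL.
  rewrite inE => /andP [d /eqP pa]; exists (relab t^-1 psi).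
    by rewrite inE relab_dist d /= ffunE pa /t tpermV tpermR.
  by apply/ffunP => v; rewrite !ffunE permKV.
rewrite (@card_imset_kernel _ _ _ _ _ ((@lclass _ e a k) \o relab t)); last first.
  move=> x y; rewrite !inE /= => /andP [dx _] /andP [dy _].
  by rewrite !lclass_eq ?relab_dist ?relab_equiv.
by rewrite imset_comp E.
Qed.

Lemma Dnum_split (c0 : 'I_k) : Dnum e a k = k * #|@lclass _ e a k @: Xc c0|.
Proof.
rewrite Dnum_lclass.
rewrite (@card_imset_kernel _ _ _ _ _ (fun psi : labeling T k => (psi a, lclass e a psi))); last first.
  move=> x y; rewrite !inE => dx dy; rewrite xpair_eqE.
  case E: (lclass e a x == lclass e a y); rewrite ?andbF ?andbT //.
  move: E; rewrite lclass_eq // => /equiv_a ->; by rewrite eqxx.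
rewrite card_pairs -[k in k * _]card_ord -sum_nat_const.
apply: eq_bigr => c _; rewrite (Xc_sym c0 c); apply: eq_card => C; rewrite inE; apply/imsetP/imsetP.
  by case=> x; rewrite inE => dx [-> ->]; exists x => //; rewrite inE dx eqxx.
by case=> x; rewrite inE => /andP [dx /eqP <-] ->; exists x; rewrite ?inE.
Qed.

End Sym.

Lemma connect_inv (T : finType) (r : rel T) (P : pred T) x y :
  (forall u v, r u v -> P u -> P v) -> connect r x y -> P x -> P y.
Proof.
move=> H /connectP [p Hp ->]; elim: p x Hp => //= z p IH x /andP [rxz Hp] Px.
by apply: IH Hp _; apply: H Px.
Qed.

Section Main.
Local Unset Implicit Arguments.
Variables (T : finType) (e : rel T) (a : T) (m : nat) (Vs : 'I_m -> {set T})
  (eH : 'I_m -> rel T) (g : nat) (VG : 'I_g -> finType) (EG : forall i, rel (VG i))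
  (aG : forall i, VG i) (cls : 'I_m -> 'I_g).
Hypotheses (esymm : symmetric e) (eirr : irreflexive e) (m0 : 0 < m)
  (aV : forall j, a \in Vs j)
  (eHsub : forall j x y, eH j x y -> [&& e x y, x \in Vs j & y \in Vs j])
  (ne : forall j, Vs j :\ a != set0)
  (conn : forall j, connected_on (Vs j :\ a) (eH j))
  (disj : forall j l, j != l -> Vs j :&: Vs l = [set a])
  (cover : forall x, exists j, x \in Vs j)
  (uniqE : forall x y, e x y -> exists! j, eH j x y)
  (isoG : forall j, rooted_iso (Vs j) (eH j) a [set: VG (cls j)] (EG (cls j)) (aG (cls j)))
  (isoH : forall j l, rooted_iso (Vs j) (eH j) a (Vs l) (eH l) a -> cls j = cls l).

Local Set Implicit Arguments.
Definition j0 : 'I_m := Ordinal m0.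
Definition idx x := odflt j0 [pick j | x \in Vs j].

Lemma idxP x : x \in Vs (idx x).
Proof.
rewrite /idx; case: pickP => //= H; case: (cover x) => j Hj.
by move: (H j); rewrite Hj.
Qed.

Lemma mem_uniq x j l : x != a -> x \in Vs j -> x \in Vs l -> j = l.
Proof.
move=> xa xj xl; apply/eqP; apply: contraNT xa => /disj H.
have : x \in Vs j :&: Vs l by rewrite inE xj xl.
by rewrite H inE.
Qed.

Lemma idx_eq x j : x != a -> x \in Vs j -> idx x = j.
Proof. by move=> xa xj; apply: (mem_uniq xa (idxP x) xj). Qed.

Lemma eE l x y : x \in Vs l -> y \in Vs l -> e x y = eH l x y.
Proof.
move=> xl yl; apply/idP/idP; last by move/eHsub => /and3P [].
move=> exy; case: (uniqE _ _ exy) => l' [H _]; case/and3P: (eHsub _ _ _ H) => _ xl' yl'.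
case: (eqVneq l l') => [-> //|nll'].
have : x \in Vs l :&: Vs l' by rewrite inE xl xl'.
have : y \in Vs l :&: Vs l' by rewrite inE yl yl'.
rewrite disj // !inE => /eqP ey /eqP ex; by move: exy; rewrite ex ey eirr.
Qed.

Lemma e_idx x y : e x y -> y != a -> x \in Vs (idx y).
Proof.
move=> exy ya; case: (uniqE _ _ exy) => l [H _]; case/and3P: (eHsub _ _ _ H) => _ xl yl.
by rewrite (idx_eq ya yl).
Qed.

Lemma e_idx2 x y : e x y -> x != a -> y != a -> idx x = idx y.
Proof.
move=> exy xa ya; apply: (idx_eq xa); exact: e_idx.
Qed.

Definition iso_spec i j (fg : (T -> VG i) * (VG i -> T)) :=
  [/\ forall x, x \in Vs j -> fg.2 (fg.1 x) = x, forall v, fg.2 v \in Vs j,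
      forall v, fg.1 (fg.2 v) = v,
      forall x y, x \in Vs j -> y \in Vs j -> EG i (fg.1 x) (fg.1 y) = e x y
    & fg.1 a = aG i].

Arguments iso_spec : clear implicits.

Lemma iso_ex i j : exists fg, cls j = i -> iso_spec i j fg.
Proof.
case: (eqVneq (cls j) i) => [E|nE]; last first.
  by exists ((fun _ => aG i), (fun _ => a)) => E; rewrite E eqxx in nE.
subst i; case: (isoG j) => f [finj fim fE fa].
pose gg v := odflt a [pick x in Vs j | f x == v].
have ggP v : gg v \in Vs j /\ f (gg v) = v.
  rewrite /gg; case: pickP => [x /andP [xj /eqP fx] | H] //=.
  have : v \in f @: Vs j by rewrite fim inE.
  by case/imsetP => x xj vx; move: (H x); rewrite xj vx eqxx.
exists (f, gg) => _; split => //=.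
- by move=> x xj; apply: finj => //; case: (ggP (f x)).
- by move=> v; case: (ggP v).
- by move=> v; case: (ggP v).
- by move=> x y xj yj; rewrite fE // (eE xj yj).
Qed.

Definition fg i j := proj1_sig (constructive_indefinite_description _ (iso_ex i j)).
Definition f i j := (fg i j).1.
Definition gi i j := (fg i j).2.

Lemma fgP i j : cls j = i -> iso_spec i j (fg i j).
Proof. exact: (proj2_sig (constructive_indefinite_description _ (iso_ex i j))). Qed.

Arguments gi : clear implicits.
Section Iso.
Variables (i : 'I_g) (j : 'I_m).
Hypothesis (Hij : cls j = i).

Let H := fgP Hij.
Lemma fK x : x \in Vs j -> gi i j (f i j x) = x.
Proof. by move: H => [H1 H2 H3 H4 H5]; apply: H1. Qed.
Lemma gV v : gi i j v \in Vs j.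
Proof. by move: H => [H1 H2 H3 H4 H5]; apply: H2. Qed.
Lemma gK v : f i j (gi i j v) = v.
Proof. by move: H => [H1 H2 H3 H4 H5]; apply: H3. Qed.
Lemma fE x y : x \in Vs j -> y \in Vs j -> EG i (f i j x) (f i j y) = e x y.
Proof. by move: H => [H1 H2 H3 H4 H5]; apply: H4. Qed.
Lemma fa : f i j a = aG i.
Proof. by move: H => [H1 H2 H3 H4 H5]; apply: H5. Qed.
Lemma ga : gi i j (aG i) = a.
Proof. by rewrite -fa fK. Qed.
Lemma gE v w : e (gi i j v) (gi i j w) = EG i v w.
Proof. by rewrite -fE ?gV // !gK. Qed.
Lemma g_inj : injective (gi i j).
Proof. by move=> v w E; rewrite -(gK v) -(gK w) E. Qed.
Lemma g_a v : (gi i j v == a) = (v == aG i).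
Proof. by rewrite -ga (inj_eq g_inj). Qed.
Lemma f_a x : x \in Vs j -> (f i j x == aG i) = (x == a).
Proof. by move=> xj; rewrite -(g_a (f i j x)) fK. Qed.
End Iso.

Section Build.
Variables (sg : 'I_m -> 'I_m) (q : forall i, 'I_m -> {perm VG i}).
Hypotheses (sg_inj : injective sg) (sg_cls : forall j, cls (sg j) = cls j)
  (q_aut : forall j, aut_fix (EG (cls j)) (aG (cls j)) (q (cls j) j)).

Let Pv j x := gi (cls j) (sg j) (q (cls j) j (f (cls j) j x)).
Let Pf x := if x == a then a else Pv (idx x) x.

Let qa j : q (cls j) j (aG (cls j)) = aG (cls j).
Proof. by case: (autfE (q_aut j)). Qed.

Let Pv_a j : Pv j a = a.
Proof. by rewrite /Pv fa // qa ga. Qed.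

Let PfE j x : x \in Vs j -> Pf x = Pv j x.
Proof.
rewrite /Pf; case: eqP => [-> _|/eqP xa xj]; first by rewrite Pv_a.
by rewrite (idx_eq xa xj).
Qed.

Let Pv_in j x : Pv j x \in Vs (sg j).
Proof. exact: gV. Qed.

Let Pv_na j x : x \in Vs j -> (Pv j x == a) = (x == a).
Proof.
move=> xj; rewrite /Pv g_a // -[X in _ == X](qa j) (inj_eq perm_inj) f_a //.
Qed.

Let Pf_inj : injective Pf.
Proof.
move=> x y.
rewrite (PfE (idxP x)) (PfE (idxP y)).
case: (eqVneq x a) => [->|xa]; case: (eqVneq y a) => [->|ya] //.
- move=> E; have : Pv (idx y) y == a by rewrite -E Pv_a.
  by rewrite Pv_na ?idxP // (negPf ya).
- move=> E; have : Pv (idx x) x == a by rewrite E Pv_a.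
  by rewrite Pv_na ?idxP // (negPf xa).
move=> E.
have Hx : Pv (idx x) x != a by rewrite Pv_na ?idxP.
have : sg (idx x) = sg (idx y).
  by apply: (mem_uniq Hx (Pv_in _ _)); rewrite E Pv_in.
move/sg_inj => Ej; move: E; rewrite /Pv -Ej => /(g_inj (sg_cls _)) /perm_inj.
move/(congr1 (gi (cls (idx x)) (idx x))).
by rewrite !fK // ?idxP // Ej idxP.
Qed.

Let Pf_in_iff x y : y != a -> (Pf x \in Vs (sg (idx y))) = (x \in Vs (idx y)).
Proof.
move=> ya; apply/idP/idP => H; last by rewrite (PfE H) Pv_in.
case: (eqVneq x a) => [->|xa]; first exact: aV.
move: H; rewrite (PfE (idxP x)) => H.
have Hx : Pv (idx x) x != a by rewrite Pv_na ?idxP.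
by rewrite -(sg_inj (mem_uniq Hx (Pv_in _ _) H)) idxP.
Qed.

Let Pf_edge_r x y : y != a -> e (Pf x) (Pf y) = e x y.
Proof.
move=> ya.
have Pya : Pf y != a by rewrite (PfE (idxP y)) Pv_na ?idxP.
have idPy : idx (Pf y) = sg (idx y).
  by apply: idx_eq => //; rewrite (PfE (idxP y)) Pv_in.
case xin: (x \in Vs (idx y)); last first.
  apply/idP/idP => E.
    by move: (e_idx E Pya); rewrite idPy Pf_in_iff // xin.
  by move: (e_idx E ya); rewrite xin.
rewrite (PfE xin) (PfE (idxP y)) /Pv gE ?sg_cls //.
have [H1 H2] := autfE (q_aut (idx y)).
by rewrite H1 fE ?idxP.
Qed.

Lemma build : exists P : {perm T}, aut_fix e a P /\
  forall j x, x \in Vs j -> P x = gi (cls j) (sg j) (q (cls j) j (f (cls j) j x)).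
Proof.
exists (perm Pf_inj); split; last by move=> j x xj; rewrite permE (PfE xj).
apply: autfI; last by rewrite permE /Pf eqxx.
move=> x y; rewrite !permE.
case: (eqVneq y a) => [->|ya]; last exact: Pf_edge_r.
case: (eqVneq x a) => [->|xa]; first by rewrite /Pf eqxx.
by rewrite esymm [RHS]esymm Pf_edge_r.
Qed.
End Build.

Definition w j := odflt a [pick x in Vs j :\ a].
Lemma wP j : w j \in Vs j :\ a.
Proof.
rewrite /w; case: pickP => //= H; move: (ne j).
by case/set0Pn => x; rewrite H.
Qed.

Lemma perm_a (p : {perm T}) x : p a = a -> (p x == a) = (x == a).
Proof. by move=> pa; rewrite -{1}pa (inj_eq perm_inj). Qed.

Lemma decomp1 p : aut_fix e a p ->
  exists sg : 'I_m -> 'I_m, forall j x, x \in Vs j -> p x \in Vs (sg j).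
Proof.
case/autfE => H1 H2.
exists (fun j => idx (p (w j))) => j x xj.
case: (eqVneq x a) => [->|xa]; first by rewrite H2 aV.
have xj' : x \in Vs j :\ a by rewrite !inE xa xj.
have : idx (p x) == idx (p (w j)).
  apply: (@connect_inv _ _ [pred z | idx (p z) == idx (p (w j))] (w j) x); last first.
  - by rewrite /= eqxx.
  - exact: (conn j (w j) x (wP j) xj').
  move=> u v /and3P [huv]; rewrite !inE => /andP [ua _] /andP [va _] /= /eqP <-.
  apply/eqP; symmetry; apply: e_idx2.
  - by rewrite H1; case/and3P: (eHsub _ _ _ huv).
  - by rewrite perm_a.
  - by rewrite perm_a.
by move/eqP <-; exact: idxP.
Qed.

Lemma decomp p : aut_fix e a p ->
  exists sg : 'I_m -> 'I_m, [/\ injective sg, forall j, cls (sg j) = cls j &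
     forall j x, x \in Vs j -> p x \in Vs (sg j)].
Proof.
move=> Ap; have [sg Hsg] := decomp1 Ap; have [tg Htg] := decomp1 (autfV Ap).
have [H1 H2] := autfE Ap.
have tgK : cancel sg tg.
  move=> j; have := wP j; rewrite !inE => /andP [wa wj].
  have := Htg _ _ (Hsg _ _ wj); rewrite permK => H.
  by apply: (mem_uniq wa H wj).
exists sg; split => //; first exact: can_inj tgK.
move=> j; symmetry; apply: isoH; exists p; split => //.
- by move=> x y _ _; apply: perm_inj.
- apply/eqP; rewrite eqEsubset; apply/andP; split; apply/subsetP => y.
    by case/imsetP => x xj ->; apply: Hsg.
  move=> yj; apply/imsetP; exists (p^-1%g y); last by rewrite permKV.
  by rewrite -(tgK j); apply: Htg.
- by move=> x y xj yj; rewrite -!eE ?H1 //; apply: Hsg.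
Qed.

Lemma lift_aut p i j l : aut_fix e a p -> cls j = i -> cls l = i ->
  (forall x, x \in Vs j -> p x \in Vs l) ->
  exists q : {perm VG i}, aut_fix (EG i) (aG i) q /\
    forall v, q v = f i l (p (gi i j v)).
Proof.
move=> Ap cj cl Hjl; have [H1 H2] := autfE Ap.
have qinj : injective (fun v => f i l (p (gi i j v))).
  move=> v v' /(congr1 (gi i l)); rewrite !fK ?Hjl ?gV //.
  by move/perm_inj/(g_inj cj).
exists (perm qinj); split; last by move=> v; rewrite permE.
apply: autfI.
  by move=> v v'; rewrite !permE -(gE cl) !fK ?Hjl ?gV // H1 gE.
by rewrite permE ga // H2 fa.
Qed.

Section Labels.
Variable k : nat.

Definition r i j (phi : labeling T k) : labeling (VG i) k := [ffun v => phi (gi i j v)].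

Definition qp i (psi psi' : labeling (VG i) k) : {perm VG i} :=
  odflt 1%g [pick q | aut_fix (EG i) (aG i) q && [forall v, psi' (q v) == psi v]].

Lemma qpP i (psi psi' : labeling (VG i) k) :
  lab_equiv (EG i) (aG i) psi psi' ->
  aut_fix (EG i) (aG i) (qp psi psi') /\ forall v, psi' (qp psi psi' v) = psi v.
Proof.
rewrite /qp; case/existsP => q0 H0; case: pickP => [q /andP [Aq /forallP Hq]|/(_ q0)].
  by split => // v; apply/eqP.
by rewrite H0.
Qed.

Lemma B2' (sg : 'I_m -> 'I_m) (phi phi' : labeling T k) :
  injective sg -> (forall j, cls (sg j) = cls j) ->
  (forall j, lab_equiv (EG (cls j)) (aG (cls j)) (r (cls j) j phi) (r (cls j) (sg j) phi')) ->
  exists P : {perm T}, [/\ aut_fix e a P, forall x, phi' (P x) = phi x &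
    forall j x, x \in Vs j -> P x \in Vs (sg j)].
Proof.
move=> sg_inj sg_cls Heq.
pose q i j := qp (r i j phi) (r i (sg j) phi').
have [P [AP HP]] := @build sg q sg_inj sg_cls (fun j => (qpP (Heq j)).1).
exists P; split => //.
  move=> x; rewrite (HP _ _ (idxP x)).
  have := (qpP (Heq (idx x))).2 (f (cls (idx x)) (idx x) x).
  by rewrite /q !ffunE fK // idxP.
by move=> j x xj; rewrite (HP _ _ xj) gV ?sg_cls.
Qed.

Lemma B2 (sg : 'I_m -> 'I_m) (phi phi' : labeling T k) :
  injective sg -> (forall j, cls (sg j) = cls j) ->
  (forall j, lab_equiv (EG (cls j)) (aG (cls j)) (r (cls j) j phi) (r (cls j) (sg j) phi')) ->
  lab_equiv e a phi phi'.
Proof.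
move=> H1 H2 H3; have [P [AP HP _]] := B2' H1 H2 H3.
by apply/existsP; exists P; rewrite AP /=; apply/forallP => x; rewrite HP.
Qed.

Lemma B1 (phi phi' : labeling T k) : lab_equiv e a phi phi' ->
  exists sg : 'I_m -> 'I_m, [/\ injective sg, forall j, cls (sg j) = cls j &
    forall j, lab_equiv (EG (cls j)) (aG (cls j)) (r (cls j) j phi) (r (cls j) (sg j) phi')].
Proof.
case/existsP => p /andP [Ap /forallP Hp].
have [sg [sg_inj sg_cls Hsg]] := decomp Ap.
exists sg; split => // j.
have [q [Aq Hq]] := lift_aut Ap (erefl (cls j)) (sg_cls j) (Hsg j).
apply/existsP; exists q; rewrite Aq /=; apply/forallP => v.
by rewrite !ffunE Hq fK ?sg_cls ?Hsg ?gV // (eqP (Hp _)).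
Qed.

Lemma A1 (phi : labeling T k) i j : distinguishing e a phi -> cls j = i ->
  distinguishing (EG i) (aG i) (r i j phi).
Proof.
move=> dphi <-; apply/forallP => q; apply/implyP => /andP [Aq Pq].
apply/negPn/negP => qn1.
pose q' i' j' := odflt 1%g [pick q0 : {perm VG i'} | aut_fix (EG i') (aG i') q0 &&
   preserves q0 (r i' j' phi) && ((j' == j) ==> (q0 != 1%g))].
have q'P j' : [&& aut_fix (EG (cls j')) (aG (cls j')) (q' (cls j') j'),
   preserves (q' (cls j') j') (r (cls j') j' phi) &
   ((j' == j) ==> (q' (cls j') j' != 1%g))].
  rewrite /q'; case: pickP => [q0 /=|H]; first by rewrite andbA.
  case: (eqVneq j' j) => [E|nE]; first by subst j'; move: (H q); rewrite Aq Pq eqxx qn1.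
  move: (H 1%g); rewrite autf1 (negPf nE) /= andbT => /negbT /negP []; apply/forallP => v.
  by rewrite perm1.
have [P [AP HP]] := @build id q' (@inj_id _) (fun _ => erefl)
   (fun j' => proj1 (andP (q'P j'))).
have P1 : P = 1%g.
  apply/eqP; move/forallP: dphi => /(_ P) /implyP; apply; rewrite AP /=.
  apply/forallP => x; rewrite (HP _ _ (idxP x)).
  case/and3P: (q'P (idx x)) => _ /forallP /(_ (f (cls (idx x)) (idx x) x)).
  by rewrite !ffunE fK ?idxP.
case/and3P: (q'P j) => _ _; rewrite eqxx /=; apply/negP; rewrite negbK.
apply/eqP/permP => v; rewrite perm1.
have := HP j (gi (cls j) j v) (gV _ _); rewrite P1 perm1 gK // => E.
by apply: (g_inj (erefl (cls j))); rewrite -E.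
Qed.

Lemma A2 (phi : labeling T k) i j l : distinguishing e a phi -> cls j = i -> cls l = i ->
  j != l -> ~~ lab_equiv (EG i) (aG i) (r i j phi) (r i l phi).
Proof.
move=> dphi cj cl njl; apply/negP => E.
pose sg : 'I_m -> 'I_m := tperm j l.
have sg_inj : injective sg by apply: perm_inj.
have sg_cls j' : cls (sg j') = cls j'.
  by rewrite /sg; case: tpermP => [->|->|]; rewrite ?cj ?cl.
have Heq j' : lab_equiv (EG (cls j')) (aG (cls j')) (r (cls j') j' phi) (r (cls j') (sg j') phi).
  rewrite /sg; case: tpermP => [->|->|_ _]; last exact: lequiv_refl.
    by rewrite cj.
  by rewrite cl; apply: lequiv_sym.
have [P [AP HP HV]] := B2' sg_inj sg_cls Heq.
have P1 : P = 1%g.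
  apply/eqP; move/forallP: dphi => /(_ P) /implyP; apply; rewrite AP /=.
  by apply/forallP => x; rewrite HP.
have := wP j; rewrite !inE => /andP [wa wj].
have := HV _ _ wj; rewrite P1 perm1 /sg tpermL => wl.
by move: njl; rewrite (mem_uniq wa wj wl) eqxx.
Qed.

Lemma A3 (phi : labeling T k) :
  (forall j, distinguishing (EG (cls j)) (aG (cls j)) (r (cls j) j phi)) ->
  (forall i j l, cls j = i -> cls l = i -> j != l ->
     ~~ lab_equiv (EG i) (aG i) (r i j phi) (r i l phi)) ->
  distinguishing e a phi.
Proof.
move=> Hd Hne; apply/forallP => p; apply/implyP => /andP [Ap /forallP Hp].
have [sg [sg_inj sg_cls Hsg]] := decomp Ap.
have Hq j : exists q : {perm VG (cls j)}, aut_fix (EG (cls j)) (aG (cls j)) q /\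
    (forall v, q v = f (cls j) (sg j) (p (gi (cls j) j v))) /\
    forall v, r (cls j) (sg j) phi (q v) = r (cls j) j phi v.
  have [q [Aq Hq]] := lift_aut Ap (erefl (cls j)) (sg_cls j) (Hsg j).
  exists q; split => //; split => // v.
  by rewrite !ffunE Hq fK ?sg_cls ?Hsg ?gV // (eqP (Hp _)).
have sgid j : sg j = j.
  apply/eqP/negPn/negP => nj.
  have [q [Aq [_ Hq']]] := Hq j.
  move: (Hne (cls j) j (sg j) erefl (sg_cls j)); rewrite eq_sym nj => /(_ isT) /negP; apply.
  by apply/existsP; exists q; rewrite Aq /=; apply/forallP => v; rewrite Hq'.
apply/eqP/permP => x; rewrite perm1.
set j := idx x; have xj : x \in Vs j := idxP x.
have [q [Aq [Hqv Hq']]] := Hq j.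
have q1 : q = 1%g.
  apply/eqP; move/forallP: (Hd j) => /(_ q) /implyP; apply; rewrite Aq /=.
  by apply/forallP => v; move: (Hq' v); rewrite sgid => ->.
have := Hqv (f (cls j) j x); rewrite q1 perm1 fK // => /(congr1 (gi (cls j) (sg j))).
by rewrite fK ?sg_cls ?Hsg // sgid fK.
Qed.

Definition comp i (phi : labeling T k) : {set {set labeling (VG i) k}} :=
  [set lclass (EG i) (aG i) (r i j phi) | j in [set j | cls j == i]].

Definition DT := {dffun forall i : 'I_g, {set {set labeling (VG i) k}}}.

Definition Fm (phi : labeling T k) : 'I_k * DT := (phi a, [ffun i => comp i phi]).

Lemma comp_sub i (phi phi' : labeling T k) :
  distinguishing e a phi -> distinguishing e a phi' -> lab_equiv e a phi phi' ->
  comp i phi \subset comp i phi'.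
Proof.
move=> d d' E; have [sg [sg_inj sg_cls Heq]] := B1 E.
apply/subsetP => B /imsetP [j]; rewrite inE => /eqP cj ->.
apply/imsetP; exists (sg j); first by rewrite inE sg_cls cj.
have := Heq j; rewrite cj => H.
by apply/eqP; rewrite lclass_eq // (A1 _ cj, A1 _ (etrans (sg_cls j) cj)).
Qed.

Lemma Fm_kernel (phi phi' : labeling T k) :
  distinguishing e a phi -> distinguishing e a phi' ->
  (lclass e a phi == lclass e a phi') = (Fm phi == Fm phi').
Proof.
move=> d d'; rewrite lclass_eq //; apply/idP/eqP.
  move=> E; rewrite /Fm (equiv_a E); congr (_, _).
  apply/ffunP => i; rewrite !ffunE; apply/eqP; rewrite eqEsubset !comp_sub //.
  exact: lequiv_sym.
case=> E1 E2.
have Ec i : comp i phi = comp i phi'.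
  by move/ffunP: E2 => /(_ i); rewrite !ffunE.
pose sg j := odflt j [pick l | (cls l == cls j) &&
   (lclass (EG (cls j)) (aG (cls j)) (r (cls j) j phi) ==
    lclass (EG (cls j)) (aG (cls j)) (r (cls j) l phi'))].
have sgP j : cls (sg j) = cls j /\ lclass (EG (cls j)) (aG (cls j)) (r (cls j) j phi) =
    lclass (EG (cls j)) (aG (cls j)) (r (cls j) (sg j) phi').
  rewrite /sg; case: pickP => [l /andP [/eqP -> /eqP H] //|H].
  have : lclass (EG (cls j)) (aG (cls j)) (r (cls j) j phi) \in comp (cls j) phi'.
    by rewrite -Ec; apply/imsetP; exists j; rewrite ?inE.
  case/imsetP => l; rewrite inE => cl El; move: (H l).
  by rewrite cl El eqxx.
have Heq j : lab_equiv (EG (cls j)) (aG (cls j)) (r (cls j) j phi) (r (cls j) (sg j) phi').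
  case: (sgP j) => c1 c2; rewrite -lclass_eq ?c2 //; first exact: A1.
  exact: A1.
apply: (@B2 sg) => // [j1 j2 E|j]; last by case: (sgP j).
apply/eqP/negPn/negP => nj.
case: (sgP j1) => c1 H1; case: (sgP j2) => c2 H2.
have E12 : cls j2 = cls j1 by rewrite -c1 -c2 E.
rewrite E12 -E in H2.
have : lclass (EG (cls j1)) (aG (cls j1)) (r (cls j1) j1 phi) ==
       lclass (EG (cls j1)) (aG (cls j1)) (r (cls j1) j2 phi) by rewrite H1 H2.
by rewrite lclass_eq ?(negPf (A2 d erefl E12 nj)) //; apply: A1.
Qed.

Definition Bset (c : 'I_k) i : {set {set {set labeling (VG i) k}}} :=
  [set B : {set {set labeling (VG i) k}} | B \subset @lclass _ (EG i) (aG i) k @: Xc (EG i) (aG i) c &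
           #|B| == #|[set j | cls j == i]|].

Definition Xg := [set phi : labeling T k | distinguishing e a phi].

Lemma slice_sub (c : 'I_k) (S : DT) : (c, S) \in Fm @: Xg -> S \in setXn (Bset c).
Proof.
case/imsetP => phi; rewrite inE => d [-> ->].
apply/setXnP => i; rewrite ffunE inE; apply/andP; split.
  apply/subsetP => B /imsetP [j]; rewrite inE => /eqP cj ->.
  apply/imsetP; exists (r i j phi) => //.
  by rewrite inE (A1 d cj) /= ffunE ga.
rewrite card_in_imset //.
move=> j1 j2; rewrite !inE => /eqP c1 /eqP c2 /eqP.
rewrite lclass_eq ?(A1 d c1) ?(A1 d c2) //.
apply: contraTeq => nj; exact: A2.
Qed.

Section Surj.
Variables (c : 'I_k) (S : DT).
Hypothesis (HS : S \in setXn (Bset c)).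

Let Ji i := enum [set j | cls j == i].
Let Li i := enum (S i).
Let C i j := nth set0 (Li i) (index j (Ji i)).
Let psi i j := odflt [ffun=> c] [pick psi : labeling (VG i) k |
   (psi \in Xc (EG i) (aG i) c) && (lclass (EG i) (aG i) psi == C i j)].
Let phi : labeling T k := [ffun x => if x == a then c else
   psi (cls (idx x)) (idx x) (f (cls (idx x)) (idx x) x)].

Let HSi i : S i \subset @lclass _ (EG i) (aG i) k @: Xc (EG i) (aG i) c /\
   #|S i| = #|[set j | cls j == i]|.
Proof. by move/setXnP: HS => /(_ i); rewrite inE => /andP [-> /eqP]. Qed.

Let size_eq i : size (Li i) = size (Ji i).
Proof. by rewrite /Li /Ji -!cardE (HSi i).2. Qed.

Let C_in i j : cls j = i -> C i j \in S i.
Proof.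
move=> cj; rewrite /C -(mem_enum (mem (S i))); apply: mem_nth.
by rewrite size_eq index_mem mem_enum inE cj.
Qed.

Let psiP i j : cls j = i ->
  psi i j \in Xc (EG i) (aG i) c /\ lclass (EG i) (aG i) (psi i j) = C i j.
Proof.
move=> cj; have := subsetP (HSi i).1 _ (C_in cj); case/imsetP => psi0 H0 E0.
rewrite /psi; case: pickP => [p /andP [Hp /eqP Ep] //|/(_ psi0)].
by rewrite H0 E0 eqxx.
Qed.

Let rE i j : cls j = i -> r i j phi = psi i j.
Proof.
move=> cj; have [Hx _] := psiP cj.
subst i; apply/ffunP => v; rewrite !ffunE.
case: (eqVneq (gi (cls j) j v) a) => [E|nE].
  move/eqP: (E); rewrite g_a // => /eqP ->.
  by move: Hx; rewrite inE => /andP [_ /eqP].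
rewrite (idx_eq nE (gV _ _)) //; by rewrite gK.
Qed.

Lemma phi_dist : distinguishing e a phi.
Proof.
apply: A3.
  move=> j; rewrite rE //; have [Hx _] := psiP (erefl (cls j)).
  by move: Hx; rewrite inE => /andP [].
move=> i j l cj cl njl; rewrite (rE cj) (rE cl); apply/negP => E.
have [Hj Ej] := psiP cj; have [Hl El] := psiP cl.
move: Hj Hl; rewrite !inE => /andP [dj _] /andP [dl _].
move: E; rewrite -lclass_eq // Ej El /C => /eqP.
have jJ : j \in Ji i by rewrite mem_enum inE cj.
have lJ : l \in Ji i by rewrite mem_enum inE cl.
move/eqP; rewrite nth_uniq ?size_eq ?index_mem ?enum_uniq // => /eqP Eidx.
by move: njl; rewrite -(nth_index j0 jJ) -(nth_index j0 lJ) Eidx eqxx.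
Qed.

Lemma phi_Fm : Fm phi = (c, S).
Proof.
rewrite /Fm ffunE eqxx; congr (_, _); apply/ffunP => i; rewrite ffunE.
have -> : comp i phi = [set C i j | j in [set j | cls j == i]].
  apply: eq_in_imset => j; rewrite inE => /eqP cj.
  by rewrite (rE cj) (psiP cj).2.
apply/eqP; rewrite eqEsubset; apply/andP; split; apply/subsetP => B.
  by case/imsetP => j; rewrite inE => /eqP cj ->; apply: C_in.
move=> BS; have BL : B \in Li i by rewrite mem_enum.
have ti : index B (Li i) < size (Ji i) by rewrite -size_eq index_mem.
set j := nth j0 (Ji i) (index B (Li i)).
have jJ : j \in Ji i by apply: mem_nth.
apply/imsetP; exists j; first by move: jJ; rewrite mem_enum.
by rewrite /C index_uniq ?enum_uniq // nth_index.
Qed.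

Lemma slice_sup : (c, S) \in Fm @: Xg.
Proof. by rewrite -phi_Fm; apply: imset_f; rewrite inE phi_dist. Qed.
End Surj.

End Labels.

Lemma main_count k : 0 < k ->
  Dnum e a k = k * \prod_(i < g) 'C(Dnum (EG i) (aG i) k %/ k, #|[set j | cls j == i]|).
Proof.
move=> k0; pose c0 : 'I_k := Ordinal k0.
rewrite Dnum_lclass (@card_imset_kernel _ _ _ _ _ (@Fm k)); last first.
  by move=> x y; rewrite !inE => dx dy; apply: Fm_kernel.
rewrite card_pairs -[k in k * _]card_ord -sum_nat_const.
apply: eq_bigr => c _.
have -> : #|[set S | (c, S) \in @Fm k @: Xg k]| = #|setXn (Bset c)|.
  apply: eq_card => S; rewrite inE; apply/idP/idP; [exact: slice_sub | exact: slice_sup].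
rewrite cardsXn; apply: eq_bigr => i _.
rewrite /Bset cards_draws (Xc_sym _ _ c c0) (Dnum_split _ _ c0) mulKn //.
Qed.

End Main.

Theorem theorem6
  (T : finType) (e : rel T) (a : T)
  (m : nat) (Vs : 'I_m -> {set T}) (eH : 'I_m -> rel T)
  (g : nat) (VG : 'I_g -> finType) (EG : forall i, rel (VG i))
  (aG : forall i, VG i) (cls : 'I_m -> 'I_g) :
  (* G is a simple graph *)
  symmetric e -> irreflexive e ->
  0 < m ->
  (* each H_j is a subgraph of G containing a *)
  (forall j, a \in Vs j) ->
  (forall j, symmetric (eH j)) ->
  (forall j x y, eH j x y -> [&& e x y, x \in Vs j & y \in Vs j]) ->
  (* H_j connected, H_j - a nonempty and connected *)
  (forall j, connected_on (Vs j) (eH j)) ->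
  (forall j, Vs j :\ a != set0) ->
  (forall j, connected_on (Vs j :\ a) (eH j)) ->
  (* pairwise intersection {a} *)
  (forall j l, j != l -> Vs j :&: Vs l = [set a]) ->
  (* G = H_1 u ... u H_m, every edge in exactly one H_j *)
  (forall x, exists j, x \in Vs j) ->
  (forall x y, e x y -> exists! j, eH j x y) ->
  (* the graphs G_i *)
  (forall i, symmetric (EG i) /\ irreflexive (EG i)) ->
  (* cls j is the equivalence class of H_j; each class nonempty *)
  (forall i, exists j, cls j = i) ->
  (forall j, rooted_iso (Vs j) (eH j) a [set: VG (cls j)] (EG (cls j)) (aG (cls j))) ->
  (forall j l, rooted_iso (Vs j) (eH j) a (Vs l) (eH l) a <-> cls j = cls l) ->
  forall k, 0 < k ->
    Dnum e a k =
    k * \prod_(i < g) 'C(Dnum (EG i) (aG i) k %/ k, #|[set j | cls j == i]|).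
Proof.
move=> esymm eirr m0 aV eHs eHsub _ ne conn disj cover uniqE _ _ isoG isoH k k0.
have H := (@main_count T e a m Vs eH g VG EG aG cls esymm eirr m0 aV eHsub ne conn disj cover uniqE isoG (fun j l => proj1 (isoH j l)) k k0).
exact: H.
Qed.
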